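(* Let $\mathcal P$ be a problem that is fixed-parameter tractable with parameter $k$, i.e. there is an $f(k)\,\mathrm{poly}(n)$-time Turing machine solving $\mathcal P$ for some computable $f$. Then there exists a $\mathrm{poly}(g(k))$-memory $(g(k)^2n^{g(k)},\,g(k)^2n^{g(k)})$-time TM-TLM that solves $\mathcal P$, where $g$ is a sufficiently large computable function.
   Context: A Turing machine with two-level memory (TM-TLM) with main memory size $M$ has a main memory tape of $M$ cells, an unbounded external memory tape, and an address tape for the external memory; it has a finite state set, alphabets and a transition function $\delta: Q\times\Gamma\to Q\times\Gamma\times\{L,S,R\}$ acting on the main memory tape, plus special read and write states: on entering a read state the machine writes an address $addr$ on the address tape and the main memory cell under the head receives the content of external cell $addr$; on entering a write state, external cell $addr$ receives the content of the main memory cell under the head. Each Read/Write is one IO operation of unit cost. Time = number of transitions other than Read/Write; IO time = number of Read/Write operations. An $M$-memory $(T,IO)$-time TM-TLM has main memory size $M$, time complexity $O(T)$ and IO complexity $O(IO)$. Here $n$ is the input size. *)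

(* Defs.v *)
From mathcomp Require Import all_boot.
Set Implicit Arguments. Unset Strict Implicit. Unset Printing Implicit Defensive.

Inductive move := MoveL | MoveS | MoveR.

(* semi-infinite tape (cells 0,1,2,...); moving left at cell 0 stays *)
Definition move_head (m : move) (h : nat) : nat :=
  match m with MoveL => h.-1 | MoveS => h | MoveR => h.+1 end.

Definition upd {T : Type} (t : nat -> T) (p : nat) (a : T) : nat -> T :=
  fun i => if i == p then a else t i.

Unset Implicit Arguments.
Record TM (Sigma : Type) := {
  tm_state : finType;
  tm_sym : finType;
  tm_blank : tm_sym;
  tm_inp : Sigma -> tm_sym;
  tm_inp_inj : injective tm_inp;
  tm_inp_nonblank : forall a, tm_inp a != tm_blank;
  tm_start : tm_state;
  tm_halt : pred tm_state;
  tm_acc : pred tm_state;               (* accepting (meaningful on halting states) *)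
  tm_delta : tm_state -> tm_sym -> tm_state * tm_sym * move }.
Arguments tm_state {Sigma}. Arguments tm_sym {Sigma}. Arguments tm_blank {Sigma}.
Arguments tm_inp {Sigma}. Arguments tm_start {Sigma}. Arguments tm_halt {Sigma}.
Arguments tm_acc {Sigma}. Arguments tm_delta {Sigma}.
Set Implicit Arguments.

Definition tm_config Sigma (M : TM Sigma) : Type :=
  (tm_state M * (nat -> tm_sym M) * nat)%type.

Definition tm_step Sigma (M : TM Sigma) (c : tm_config M) : tm_config M :=
  let '(q, t, h) := c in
  if tm_halt M q then c else
  let '(q', a, m) := tm_delta M q (t h) in (q', upd t h a, move_head m h).

Definition tm_init Sigma (M : TM Sigma) (x : seq Sigma) : tm_config M :=
  (tm_start M,
   (fun i => match onth x i with Some a => tm_inp M a | None => tm_blank M end),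
   0).

Definition tm_run Sigma (M : TM Sigma) (x : seq Sigma) (t : nat) : tm_config M :=
  iter t (@tm_step Sigma M) (tm_init M x).

Definition tm_cstate Sigma (M : TM Sigma) (c : tm_config M) : tm_state M :=
  let '(q, _, _) := c in q.
Definition tm_ctape Sigma (M : TM Sigma) (c : tm_config M) : nat -> tm_sym M :=
  let '(_, t, _) := c in t.

Definition tm_decides_in Sigma (M : TM Sigma) (Q : pred (seq Sigma))
    (T : seq Sigma -> nat) : Prop :=
  forall x, tm_halt M (tm_cstate (tm_run M x (T x))) /\
            tm_acc M (tm_cstate (tm_run M x (T x))) = Q x.

(* output convention: the number v is written in unary on the tape:
   cells 0..v-1 non-blank, cell v blank *)
Definition tm_output_is Sigma (M : TM Sigma) (c : tm_config M) (v : nat) : Prop :=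
  (forall i, i < v -> tm_ctape c i != tm_blank M) /\ tm_ctape c v = tm_blank M.

Definition computable (f : nat -> nat) : Prop :=
  exists M : TM unit, forall k, exists t,
    tm_halt M (tm_cstate (tm_run M (nseq k tt) t)) /\
    tm_output_is (tm_run M (nseq k tt) t) (f k).

Definition poly_computable Sigma (kappa : seq Sigma -> nat) : Prop :=
  exists (M : TM Sigma) (c : nat), forall x,
    tm_halt M (tm_cstate (tm_run M x (size x ^ c + c))) /\
    tm_output_is (tm_run M x (size x ^ c + c)) (kappa x).

Definition fpt Sigma (Q : pred (seq Sigma)) (kappa : seq Sigma -> nat) : Prop :=
  poly_computable kappa /\
  exists f, computable f /\
  exists (M : TM Sigma) (c : nat),
    tm_decides_in M Q (fun x => f (kappa x) * (size x ^ c + c)).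

(* Normal states: apply delta (one unit of time).
   Read / Write states: on entering them the IO operation is performed
   (one unit of IO time, no time), then control passes to tl_next q.  *)
Inductive skind := KNormal | KRead | KWrite | KHalt.

Unset Implicit Arguments.
Record TLM (Sigma : Type) := {
  tl_state : finType;
  tl_sym : finType;
  tl_blank : tl_sym;
  tl_inp : Sigma -> tl_sym;
  tl_inp_inj : injective tl_inp;
  tl_inp_nonblank : forall a, tl_inp a != tl_blank;
  tl_start : tl_state;
  tl_kind : tl_state -> skind;
  tl_acc : pred tl_state;
  tl_next : tl_state -> tl_state;      (* continuation after a Read/Write *)
  (* action on the main memory tape, plus writing the (binary, write-only)
     address tape: optionally write a bit under the address head, move it *)
  tl_delta : tl_state -> tl_sym -> tl_state * tl_sym * move * option bool * move }.
Arguments tl_state {Sigma}. Arguments tl_sym {Sigma}. Arguments tl_blank {Sigma}.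
Arguments tl_inp {Sigma}. Arguments tl_start {Sigma}. Arguments tl_kind {Sigma}.
Arguments tl_acc {Sigma}. Arguments tl_next {Sigma}. Arguments tl_delta {Sigma}.
Set Implicit Arguments.

Record tl_config Sigma (D : TLM Sigma) := TLConfig {
  cf_state : tl_state D;
  cf_main : nat -> tl_sym D;    (* only cells 0..Msz-1 are ever accessed *)
  cf_head : nat;
  cf_ext : nat -> tl_sym D;     (* unbounded external memory *)
  cf_addr : seq bool;           (* address tape, least significant bit first *)
  cf_ahead : nat;
  cf_time : nat;                (* number of transitions other than Read/Write *)
  cf_io : nat }.                (* number of Read/Write operations *)

Definition addr_val (s : seq bool) : nat := foldr (fun (b : bool) (acc : nat) => nat_of_bool b + 2 * acc) 0 s.

Definition move_main (Msz : nat) (m : move) (h : nat) : nat :=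
  match m with
  | MoveL => h.-1 | MoveS => h | MoveR => if h.+1 < Msz then h.+1 else h end.

Definition tl_step Sigma (D : TLM Sigma) (Msz : nat) (c : tl_config D)
    : tl_config D :=
  let: TLConfig q mn h ex ad ah tm io := c in
  match tl_kind D q with
  | KHalt => c
  | KNormal =>
      let '(q', a, m, ob, ma) := tl_delta D q (mn h) in
      TLConfig q' (upd mn h a) (move_main Msz m h) ex
        (match ob with Some b => set_nth false ad ah b | None => ad end)
        (move_head ma ah) tm.+1 io
  | KRead =>
      TLConfig (tl_next D q) (upd mn h (ex (addr_val ad))) h ex ad ah tm io.+1
  | KWrite =>
      TLConfig (tl_next D q) mn h (upd ex (addr_val ad) (mn h)) ad ah tm io.+1
  end.

Definition tl_init Sigma (D : TLM Sigma) (x : seq Sigma) : tl_config D :=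
  TLConfig (tl_start D) (fun _ => tl_blank D) 0
    (fun i => match onth x i with Some a => tl_inp D a | None => tl_blank D end)
    [::] 0 0 0.

Definition tl_run Sigma (D : TLM Sigma) (Msz : nat) (x : seq Sigma) (s : nat)
    : tl_config D := iter s (@tl_step Sigma D Msz) (tl_init D x).

Definition tl_solves_on Sigma (D : TLM Sigma) (Msz : nat) (Q : pred (seq Sigma))
    (x : seq Sigma) (T IO : nat) : Prop :=
  exists s, let c := tl_run D Msz x s in
    tl_kind D (cf_state c) = KHalt /\ tl_acc D (cf_state c) = Q x /\
    cf_time c <= T /\ cf_io c <= IO.

(* Main.v *)
Require Import Defs.
From mathcomp Require Import all_boot zify.
From Stdlib Require Import FunctionalExtensionality.
Set Implicit Arguments. Unset Strict Implicit.

Lemma addr_cons (b : bool) s : addr_val (b :: s) = b + 2 * addr_val s.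
Proof. by []. Qed.

Lemma addr_set ad p (b : bool) :
  addr_val (set_nth false ad p b) + nth false ad p * 2 ^ p = addr_val ad + b * 2 ^ p.
Proof.
elim: ad p => [|x ad IH] [|p] /=.
- rewrite expn0; lia.
- rewrite !add0n mul0n addn0.
  have H : forall p, addr_val (ncons p false [:: b]) = b * 2 ^ p.
    elim=> [|q IHq] /=; first by rewrite muln1 addn0.
    rewrite add0n IHq expnS; lia.
  rewrite H expnS; lia.
- rewrite expn0; lia.
- idtac.
  have := IH p. rewrite expnS. nia.
Qed.

Lemma addr_bit ad p : nth false ad p = odd (addr_val ad %/ 2 ^ p).
Proof.
elim: ad p => [|x ad IH] p; first by rewrite /= div0n nth_nil.
case: p => [|p]; first by rewrite /= expn0 divn1 oddD oddM /= addbF; case: x.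
rewrite /= IH expnS divnMA; congr (odd (_ %/ _)).
rewrite addnC mulnC divnMDl // divn_small ?addn0 //; by case: x.
Qed.

Definition lowc p (c : bool) := if c then (2 ^ p).-1 else 0.

Lemma lowc_lt p c : lowc p c < 2 ^ p.
Proof. rewrite /lowc; have := expn_gt0 2 p; case: c => /= h //; lia. Qed.

Lemma lowcS p c : lowc p.+1 c = lowc p c + c * 2 ^ p.
Proof. rewrite /lowc expnS; have := expn_gt0 2 p; case: c => /= h; lia. Qed.

Lemma bitE ad p L K : addr_val ad = L + 2 ^ p * K -> L < 2 ^ p -> nth false ad p = odd K.
Proof.
move=> h hL; rewrite addr_bit h addnC mulnC divnMDl ?expn_gt0 // divn_small // addn0 //.
Qed.

Section Sim.
Variable Sigma : Type.
Variable M : TM Sigma.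

Local Notation Y := (option (tm_sym M * bool)).
Local Notation ST := ('I_19 * tm_state M * Y * bool * bool * bool)%type.
Notation PH k := (@Ordinal 19 k erefl).

Definition Fst (q : tm_state M) : ST := (PH 0, q, None, false, false, false).

Definition skind_of (st : ST) : skind :=
  let '(ph, q, v, ctx, c, tmp) := st in
  match nat_of_ord ph with
  | 0 => if tm_halt M q then KHalt else KRead
  | 2 | 3 | 6 | 10 | 11 | 18 => KWrite
  | 4 | 8 | 16 => KRead
  | _ => KNormal end.

Definition snext (st : ST) : ST :=
  let '(ph, q, v, ctx, c, tmp) := st in
  match nat_of_ord ph with
  | 0 => (PH 1, q, v, ctx, c, tmp)
  | 2 => Fst q
  | 3 => (PH 4, q, v, false, c, false)
  | 4 => (PH 5, q, v, ctx, c, tmp)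
  | 6 => (PH 7, q, v, ctx, c, tmp)
  | 8 => (PH 9, q, v, ctx, c, tmp)
  | 10 => (PH 12, q, v, ctx, c, tmp)
  | 11 => (PH 13, q, v, ctx, c, tmp)
  | 16 => (PH 17, q, v, ctx, c, tmp)
  | 18 => Fst q
  | _ => st end.

Definition sdelta (st : ST) (a : Y) : ST * Y * move * option bool * move :=
  let '(ph, q, v, ctx, c, tmp) := st in
  let b := if ctx then ~~ c else c in
  match nat_of_ord ph with
  | 1 => match a with
         | Some (s, z) =>
           let '(q', s', m) := tm_delta M q s in
           (match m with
            | MoveS => (PH 2, q', None, false, false, false)
            | MoveL => if z then (PH 2, q', None, false, false, false)
                       else (PH 3, q', None, false, true, false)
            | MoveR => (PH 3, q', None, false, false, false) end,
            Some (s', z), MoveS, None, MoveS)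
         | None => (st, a, MoveS, None, MoveS) end
  | 5 => ((PH 6, q, a, ctx, c, tmp), None, MoveS, None, MoveS)
  | 7 => ((PH 8, q, v, ctx, c, tmp), a, MoveS, Some b, MoveS)
  | 9 => if a == None then ((PH 10, q, v, ctx, c, tmp), v, MoveS, None, MoveS)
         else ((PH 11, q, v, ctx, c, tmp), v, MoveS, Some (~~ b), MoveS)
  | 12 => if ctx then (Fst q, a, MoveS, (if tmp then Some c else None), MoveS)
          else ((PH 15, q, v, true, c, false), a, MoveS, Some (~~ c), MoveS)
  | 13 => if ctx then ((PH 14, q, v, ctx, c, tmp), a, MoveS, Some (~~ c), MoveR)
          else ((PH 4, q, v, false, c, tmp), a, MoveS, Some c, MoveR)
  | 14 => ((PH 15, q, v, true, c, true), a, MoveS, (if tmp then Some c else None), MoveL)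
  | 15 => ((PH 4, q, v, true, c, tmp), a, MoveS, None, MoveL)
  | 17 => match a with
          | Some (s, _) => ((PH 18, q, v, ctx, c, tmp), Some (s, true), MoveS, None, MoveS)
          | None => (st, a, MoveS, None, MoveS) end
  | _ => (st, a, MoveS, None, MoveS) end.

Lemma sinp_inj : injective (fun a : Sigma => Some (tm_inp M a, false) : Y).
Proof. by move=> a b [] /(@tm_inp_inj _ M). Qed.

Lemma sinp_nonblank a : (Some (tm_inp M a, false) : Y) != Some (tm_blank M, false).
Proof. apply/eqP => [[]] /eqP; by rewrite (negbTE (@tm_inp_nonblank _ M a)). Qed.

Definition D : TLM Sigma := {|
  tl_state := ST;
  tl_sym := Y;
  tl_blank := Some (tm_blank M, false);
  tl_inp := fun a => Some (tm_inp M a, false);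
  tl_inp_inj := sinp_inj;
  tl_inp_nonblank := sinp_nonblank;
  tl_start := (PH 16, tm_start M, None, false, false, false);
  tl_kind := skind_of;
  tl_acc := fun st => let '(ph, q, v, ctx, c, tmp) := st in tm_acc M q;
  tl_next := snext;
  tl_delta := sdelta |}.

End Sim.

Section Sim2.
Variable Sigma : Type.
Variable M : TM Sigma.
Notation PH k := (@Ordinal 19 k erefl).
Notation DD := (D M).
Notation Y := (option (tm_sym M * bool)).
Notation Cfg := (@TLConfig Sigma DD).
Notation step := (@tl_step Sigma DD 1).

Definition reach (c c' : tl_config DD) := exists s, iter s step c = c'.

Lemma reach_refl c : reach c c. Proof. by exists 0. Qed.
Lemma reach_step c c' : reach (step c) c' -> reach c c'.
Proof. by case=> s <-; exists s.+1; rewrite iterSr. Qed.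
Lemma reach_trans c1 c2 c3 : reach c1 c2 -> reach c2 c3 -> reach c1 c3.
Proof. by case=> s1 <- [s2 <-]; exists (s2 + s1); rewrite iterD. Qed.

Lemma upd_same T (E : nat -> T) a : upd E a (E a) = E.
Proof. apply: functional_extensionality => i; rewrite /upd; by case: eqP => [->|]. Qed.

Lemma upd_eq T (E : nat -> T) a x : upd E a x a = x.
Proof. by rewrite /upd eqxx. Qed.

Lemma upd_upd T (E : nat -> T) a x y : upd (upd E a x) a y = upd E a y.
Proof. apply: functional_extensionality => i; rewrite /upd; by case: eqP. Qed.

Lemma probe_same (q : tm_state M) (v : Y) (ctx c tmp : bool) (mn E : nat -> Y) ad p tm io :
  (forall i, E i != None) ->
  nth false ad p = (if ctx then ~~ c else c) ->
  exists mn' v',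
   reach (Cfg (PH 4, q, v, ctx, c, tmp) mn 0 E ad p tm io)
         (Cfg (PH 12, q, v', ctx, c, tmp) mn' 0 E
            (set_nth false ad p (if ctx then ~~ c else c)) p tm.+3 (io+4)).
Proof.
move=> hE hb.
set b := (if ctx then ~~ c else c) in hb *.
have ha : addr_val (set_nth false ad p b) = addr_val ad.
  have := addr_set ad p b; rewrite hb; lia.
do 2 eexists.
apply: reach_step; rewrite /tl_step /=.
apply: reach_step; rewrite /tl_step /= upd_eq.
apply: reach_step; rewrite /tl_step /= upd_eq.
apply: reach_step; rewrite /tl_step /= upd_eq.
apply: reach_step; rewrite /tl_step /= -/b ha upd_eq.
apply: reach_step; rewrite /tl_step /=.
apply: reach_step; rewrite /tl_step /= ha !upd_eq (upd_upd E) upd_same.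
have -> : io.+4 = io + 4 by lia.
exact: reach_refl.
Qed.

Lemma probe_diff (q : tm_state M) (v : Y) (ctx c tmp : bool) (mn E : nat -> Y) ad p tm io :
  (forall i, E i != None) ->
  nth false ad p = ~~ (if ctx then ~~ c else c) ->
  exists mn' v',
   reach (Cfg (PH 4, q, v, ctx, c, tmp) mn 0 E ad p tm io)
         (Cfg (PH 13, q, v', ctx, c, tmp) mn' 0 E
            (set_nth false (set_nth false ad p (if ctx then ~~ c else c)) p
               (~~ (if ctx then ~~ c else c))) p tm.+3 (io+4)).
Proof.
move=> hE hb.
set b := (if ctx then ~~ c else c) in hb *.
set ad1 := set_nth false ad p b.
have h1 : addr_val ad1 + (~~ b) * 2 ^ p = addr_val ad + b * 2 ^ p.
  by have := addr_set ad p b; rewrite hb.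
have hn1 : nth false ad1 p = b by rewrite nth_set_nth /= eqxx.
have ha : addr_val (set_nth false ad1 p (~~ b)) = addr_val ad.
  have := addr_set ad1 p (~~ b); rewrite hn1; have := expn_gt0 2 p; case: (b) h1 => /=; lia.
have hne : (addr_val ad1 == addr_val ad) = false.
  apply/eqP; have := expn_gt0 2 p; case: (b) h1 => /=; lia.
do 2 eexists.
apply: reach_step; rewrite /tl_step /=.
apply: reach_step; rewrite /tl_step /= upd_eq.
apply: reach_step; rewrite /tl_step /= upd_eq.
apply: reach_step; rewrite /tl_step /= upd_eq.
apply: reach_step; rewrite /tl_step /= -/b -/ad1.
apply: reach_step; rewrite /tl_step /= upd_eq {1}/upd hne (negbTE (hE _)).
apply: reach_step; rewrite /tl_step /= ha !upd_eq (upd_upd E) upd_same.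
have -> : io.+4 = io + 4 by lia.
exact: reach_refl.
Qed.

Lemma odd_b2 (x : bool) K : odd (x + 2 * K) = x.
Proof. by rewrite oddD oddM /= addbF; case: x. Qed.

Lemma addr_setE ad p (b x : bool) L K : addr_val ad = L + 2 ^ p * (x + 2 * K) -> L < 2 ^ p ->
  addr_val (set_nth false ad p b) = L + 2 ^ p * (b + 2 * K).
Proof.
move=> h hL; have hb := bitE h hL.
have := addr_set ad p b; rewrite hb h odd_b2 => h2; nia.
Qed.

Lemma ret_lemma (q : tm_state M) (v : Y) (ctx c tmp : bool) (mn E : nat -> Y) ad p H tm io :
  (forall i, E i != None) ->
  addr_val ad = lowc p c + 2 ^ p * (~~ c + 2 * H) ->
  exists mn' ad',
   reach (Cfg (PH 15, q, v, ctx, c, tmp) mn 0 E ad p tm io)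
         (Cfg (Fst q) mn' 0 E ad' 0 (tm + 6 * p + 5) (io + 4 * p + 4)) /\ addr_val ad' = lowc p c + 2 ^ p * ((if tmp then c else ~~ c) + 2 * H).
Proof.
move=> hE.
elim: p q v ctx tmp mn ad H tm io => [|p IH] q v ctx tmp mn ad H tm io ha.
- have hb : nth false ad 0 = (if true then ~~ c else c).
    rewrite (bitE (L := 0) (K := ~~ c + 2 * H)) ?odd_b2 //.
    by rewrite ha /lowc expn0; case: (c).
  have [mn1 [v1 hr]] := @probe_same q v true c tmp (upd mn 0 (mn 0)) E ad 0 tm.+1 io hE hb.
  exists (upd mn1 0 (mn1 0)); exists (if tmp then set_nth false (set_nth false ad 0 (~~c)) 0 c else set_nth false ad 0 (~~c)); split.
  + apply: reach_step; rewrite /tl_step /=.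
    apply: reach_trans hr _.
    apply: reach_step; rewrite /tl_step /=.
    have -> : tm.+1.+4 = tm + 6 * 0 + 5 by lia.
    rewrite !muln0 !addn0. by case: (tmp); apply: reach_refl.
  + have h1 := addr_setE (~~ c) ha (lowc_lt 0 c).
    case: (tmp) => //.
    exact: addr_setE h1 (lowc_lt 0 c).
- have hP := expn_gt0 2 p.
  have hl := lowc_lt p c.
  have ha' : addr_val ad = lowc p c + 2 ^ p * (c + 2 * (~~ c + 2 * H)).
    rewrite ha lowcS expnS; case: (c) => /=; nia.
  have hb : nth false ad p = ~~ (if true then ~~ c else c).
    by rewrite negbK (bitE ha' hl) odd_b2.
  have [mn1 [v1 hr]] := @probe_diff q v true c tmp (upd mn 0 (mn 0)) E ad p tm.+1 io hE hb.
  set ad2 := set_nth false (set_nth false ad p _) p _ in hr.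
  have h2 : addr_val ad2 = lowc p c + 2 ^ p * (c + 2 * (~~ c + 2 * H)).
    rewrite /ad2 negbK; apply: (addr_setE _ _ hl); exact: (addr_setE _ ha' hl).
  set ad3 := set_nth false ad2 p (~~ c).
  have h3 : addr_val ad3 = (lowc p c + ~~ c * 2 ^ p) + 2 ^ p.+1 * (~~ c + 2 * H).
    rewrite /ad3 (addr_setE (~~ c) h2 hl) expnS; nia.
  have hl' : lowc p c + ~~ c * 2 ^ p < 2 ^ p.+1 by rewrite expnS; case: (c) => /=; lia.
  set ad4 := if tmp then set_nth false ad3 p.+1 c else ad3.
  have h4 : addr_val ad4 = lowc p c + 2 ^ p * (~~ c + 2 * ((if tmp then c else ~~ c) + 2 * H)).
    rewrite /ad4; case: (tmp).
    + rewrite (addr_setE c h3 hl') expnS; nia.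
    + rewrite h3 expnS; nia.
  have [mn2 [ad5 [hr5 ha5]]] := IH q v1 true true (upd (upd mn1 0 (mn1 0)) 0 (upd mn1 0 (mn1 0) 0)) ad4 _ tm.+1.+3.+1.+1 (io + 4) h4.
  exists mn2, ad5; split.
  + apply: reach_step; rewrite /tl_step /=.
    apply: reach_trans hr _.
    apply: reach_step; rewrite /tl_step /= -/ad3.
    apply: reach_step; rewrite /tl_step /=.
    have -> : tm + 6 * p.+1 + 5 = tm.+1.+3.+1.+1 + 6 * p + 5 by lia.
    have -> : io + 4 * p.+1 + 4 = io + 4 + 4 * p + 4 by lia.
    have -> : (match (if tmp then Some c else None) with Some b => set_nth false ad3 p.+1 b | None => ad3 end) = ad4
      by rewrite /ad4; case: (tmp).
    exact: hr5.
  + rewrite ha5 lowcS expnS; case: (c); case: (tmp) => /=; nia.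
Qed.

Lemma scan_lemma (q : tm_state M) (v : Y) (e tmp : bool) (mn E : nat -> Y) ad p K a tm io :
  (forall i, E i != None) ->
  addr_val ad = lowc p e + 2 ^ p * K ->
  a = lowc p (~~ e) + 2 ^ p * K ->
  (e -> 0 < K) ->
  exists mn' ad' tm' io',
   reach (Cfg (PH 4, q, v, false, e, tmp) mn 0 E ad p tm io)
         (Cfg (Fst q) mn' 0 E ad' 0 tm' io') /\
   addr_val ad' = (if e then a.-1 else a.+1) /\
   tm' + io' + 8 * p <= tm + io + 18 * a + 17.
Proof.
move=> hE.
elim/ltn_ind: K p q v tmp mn ad tm io => K IH p q v tmp mn ad tm io ha hA hK.
have hP := expn_gt0 2 p.
have hl := lowc_lt p e.
set H := K./2.
have hK2 : K = odd K + 2 * H by rewrite /H; have := odd_double_half K; rewrite -muln2; lia.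
have hbit : nth false ad p = odd K by rewrite (bitE ha hl).
have hpa : p <= a.
  have := ltn_expl p (ltnSn 1); rewrite hA /lowc; case: (e) hK => /= hK'; last lia.
  move=> hh; have := hK' erefl; nia.
case: (boolP (odd K == e)) => /eqP hoe.
- have hb : nth false ad p = (if false then ~~ e else e) by rewrite hbit hoe.
  have [mn1 [v1 hr]] := @probe_same q v false e tmp mn E ad p tm io hE hb.
  have ha1 : addr_val ad = lowc p e + 2 ^ p * (e + 2 * H) by rewrite ha {1}hK2 hoe.
  set ad1 := set_nth false ad p _ in hr.
  have h1 : addr_val ad1 = lowc p e + 2 ^ p * (e + 2 * H) by exact: (addr_setE _ ha1 hl).
  set ad2 := set_nth false ad1 p (~~ e).
  have h2 : addr_val ad2 = lowc p e + 2 ^ p * (~~ e + 2 * H) by exact: (addr_setE _ h1 hl).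
  have [mn5 [ad5 [hr5 ha5]]] := @ret_lemma q v1 true e false (upd mn1 0 (mn1 0)) E ad2 p H tm.+3.+1 (io + 4) hE h2.
  exists mn5, ad5, (tm.+3.+1 + 6 * p + 5), (io + 4 + 4 * p + 4); split; [|split].
  + apply: reach_trans hr _.
    apply: reach_step; rewrite /tl_step /= -/ad2.
    exact: hr5.
  + rewrite ha5 hA /lowc; move: hP hK2; rewrite hoe; case: (e) => /= hP' hK2'; nia.
  + lia.
- have hoe' : odd K = ~~ e by move: hoe; case: (odd K) (e) => [] [].
  have hK3 : K = ~~ e + 2 * H by rewrite {1}hK2 hoe'.
  have hb : nth false ad p = ~~ (if false then ~~ e else e) by rewrite hbit hoe'.
  have [mn1 [v1 hr]] := @probe_diff q v false e tmp mn E ad p tm io hE hb.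
  have ha1 : addr_val ad = lowc p e + 2 ^ p * (~~ e + 2 * H) by rewrite ha {1}hK3.
  set ad2 := set_nth false (set_nth false ad p _) p _ in hr.
  have h2 : addr_val ad2 = lowc p e + 2 ^ p * (~~ e + 2 * H).
    rewrite /ad2 /=; apply: (addr_setE _ _ hl); exact: (addr_setE _ ha1 hl).
  set ad3 := set_nth false ad2 p e.
  have h3 : addr_val ad3 = lowc p.+1 e + 2 ^ p.+1 * H.
    rewrite /ad3 (addr_setE _ h2 hl) lowcS expnS; nia.
  have hHK : H < K by move: hK; case: (e) hK3 => /= hK3' hK'; [have := hK' erefl|]; lia.
  have hA' : a = lowc p.+1 (~~ e) + 2 ^ p.+1 * H.
    rewrite hA {1}hK3 lowcS expnS; case: (e) => /=; nia.
  have hK' : e -> 0 < H by move: hK; case: (e) hK3 => /= hK3' hK' // _; have := hK' erefl; lia.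
  have [mn5 [ad5 [tm5 [io5 [hr5 [ha5 hc5]]]]]] :=
    IH H hHK p.+1 q v1 tmp (upd mn1 0 (mn1 0)) ad3 tm.+3.+1 (io + 4) h3 hA' hK'.
  exists mn5, ad5, tm5, io5; split; [|split].
  + apply: reach_trans hr _.
    apply: reach_step; rewrite /tl_step /= -/ad3.
    exact: hr5.
  + exact: ha5.
  + lia.
Qed.

Definition good (cf : tl_config DD) (tc : tm_config M) : Prop :=
  let '(q, t, h) := tc in
  cf_state cf = Fst q /\ cf_head cf = 0 /\ cf_ext cf = (fun i => Some (t i, i == 0)) /\
  addr_val (cf_addr cf) = h /\ cf_ahead cf = 0.

Lemma ext_upd (t : nat -> tm_sym M) h s' :
  upd (fun i => (Some (t i, i == 0) : Y)) h (Some (s', h == 0)) =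
  (fun i => Some (upd t h s' i, i == 0)).
Proof.
apply: functional_extensionality => i; rewrite /upd; by case: eqP => [->|].
Qed.

Lemma step_lemma cf (q : tm_state M) t h :
  good cf (q, t, h) -> ~~ tm_halt M q ->
  exists cf', reach cf cf' /\ good cf' (tm_step (q, t, h)) /\
    cf_time cf' + cf_io cf' <= cf_time cf + cf_io cf + 18 * h + 20.
Proof.
case: cf => st mn hh ex ad ah tm io /= [-> [-> [-> [ha ->]]]] hq.
rewrite /tm_step (negbTE hq).
case hd: (tm_delta M q (t h)) => [[q' s'] m].
set E' := upd (fun i => (Some (t i, i == 0) : Y)) h (Some (s', h == 0)).
have hE' : forall i, E' i != None by move=> i; rewrite /E' /upd; case: (i == h).
have hE'' : E' = (fun i => Some (upd t h s' i, i == 0)) by exact: ext_upd.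
case: m hd => hd.
-
  case: (eqVneq h 0) => hz.
  + eexists; split; [|split].
    * apply: reach_step; rewrite /tl_step /= (negbTE hq).
      apply: reach_step; rewrite /tl_step /= ha hd.
      have hz' : (h == 0) = true by apply/eqP.
      rewrite {1}hz' /=.
      apply: reach_step; rewrite /tl_step /= ha upd_eq -/E'.
      exact: reach_refl.
    * by rewrite /= hE'' ha hz.
    * rewrite /=; lia.
  + have hz' : (h == 0) = false by apply: negbTE.
    have ha0 : addr_val ad = lowc 0 true + 2 ^ 0 * h by rewrite ha /lowc /= expn0; lia.
    have hA : h = lowc 0 (~~ true) + 2 ^ 0 * h by rewrite /lowc /= expn0; lia.
    have hK : true -> 0 < h by move=> _; lia.
    have [mn5 [ad5 [tm5 [io5 [hr5 [ha5 hc5]]]]]] :=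
      @scan_lemma q' None true false (upd (upd mn 0 (Some (t h, h == 0))) 0 (Some (s', h == 0)))
        E' ad 0 h h tm.+1 io.+2 hE' ha0 hA hK.
    exists (Cfg (Fst q') mn5 0 E' ad5 0 tm5 io5); split; [|split].
    * apply: reach_step; rewrite /tl_step /= (negbTE hq).
      apply: reach_step; rewrite /tl_step /= ha hd.
      rewrite {1}hz' /=.
      apply: reach_step; rewrite /tl_step /= ha upd_eq -/E'.
      exact: hr5.
    * by rewrite /= hE'' ha5.
    * rewrite /=; lia.
- eexists; split; [|split].
  * apply: reach_step; rewrite /tl_step /= (negbTE hq).
    apply: reach_step; rewrite /tl_step /= ha hd /=.
    apply: reach_step; rewrite /tl_step /= ha upd_eq -/E'.
    exact: reach_refl.
  * by rewrite /= hE'' ha.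
  * rewrite /=; lia.
- have ha0 : addr_val ad = lowc 0 false + 2 ^ 0 * h by rewrite ha /lowc /= expn0; lia.
  have hA : h = lowc 0 (~~ false) + 2 ^ 0 * h by rewrite /lowc /= expn0; lia.
  have hK : false -> 0 < h by [].
  have [mn5 [ad5 [tm5 [io5 [hr5 [ha5 hc5]]]]]] :=
    @scan_lemma q' None false false (upd (upd mn 0 (Some (t h, h == 0))) 0 (Some (s', h == 0)))
      E' ad 0 h h tm.+1 io.+2 hE' ha0 hA hK.
  exists (Cfg (Fst q') mn5 0 E' ad5 0 tm5 io5); split; [|split].
  * apply: reach_step; rewrite /tl_step /= (negbTE hq).
    apply: reach_step; rewrite /tl_step /= ha hd /=.
    apply: reach_step; rewrite /tl_step /= ha upd_eq -/E'.
    exact: hr5.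
  * by rewrite /= hE'' ha5.
  * rewrite /=; lia.
Qed.

Lemma tm_head_bound (x : seq Sigma) t : (tm_run M x t).2 <= t.
Proof.
elim: t => [|t IH]; first by [].
rewrite /tm_run iterS -/(tm_run M x t).
case: (tm_run M x t) IH => [[q tp] h] /= IH.
case: (tm_halt M q) => /=; first lia.
case: (tm_delta M q (tp h)) => [[q' a] []] /=; lia.
Qed.

Lemma init_lemma (x : seq Sigma) :
  good (tl_run DD 1 x 3) (tm_init M x) /\ cf_time (tl_run DD 1 x 3) + cf_io (tl_run DD 1 x 3) = 3.
Proof.
case: x => [|a x]; rewrite /tl_run /tl_init /tm_init /=.
- split; last by [].
  split; first by []. split; first by []. split; last by [].
  apply: functional_extensionality => i; rewrite /upd; by case: i.
- split; last by [].
  split; first by []. split; first by []. split; last by [].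
  apply: functional_extensionality => i; rewrite /upd; case: i => // n /=; by case: (onth x n).
Qed.

Lemma run_lemma (x : seq Sigma) t : exists s,
  good (tl_run DD 1 x s) (tm_run M x t) /\
  cf_time (tl_run DD 1 x s) + cf_io (tl_run DD 1 x s) <= 3 + 20 * (t * (t + 1)).
Proof.
elim: t => [|t [s [hg hc]]].
  exists 3; have [h1 h2] := init_lemma x; split => //; rewrite h2; lia.
have hb := tm_head_bound x t.
rewrite /tm_run iterS -/(tm_run M x t).
move: hg hb; case: (tm_run M x t) => [[q tp] h] hg hb.
case hh: (tm_halt M q).
  exists s; split; first by rewrite /tm_step hh.
  have hm : t * (t + 1) <= t.+1 * (t.+1 + 1) by apply: leq_mul; lia.
  lia.
have [cf' [[s' hr] [hg' hc']]] := step_lemma hg (negbT hh).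
exists (s' + s); rewrite /tl_run iterD -/(tl_run DD 1 x s) hr; split => //.
have e1 : t.+1 * (t.+1 + 1) = t * (t + 1) + 2 * (t + 1) by rewrite !addn1 !mulSn !mulnS; lia.
rewrite e1; simpl in hb; lia.
Qed.

End Sim2.

Section Comp.
Variable Mf : TM unit.
Variable d : nat.

Local Notation Sy := (tm_sym Mf * bool)%type.
Local Notation St := (tm_state Mf + option (option (option 'I_(d.+2))))%type.

Definition GoL : St := inr (Some None).
Definition ScanR : St := inr (Some (Some None)).
Definition Pad (j : nat) : St := inr (Some (Some (Some (inord j)))).

Definition haltp (st : St) : bool :=
  match st with inr (Some (Some (Some j))) => nat_of_ord j == d.+1 | _ => false end.

Definition cdelta (st : St) (a : Sy) : St * Sy * move :=
  let '(s, fl) := a in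
  match st with
  | inl q => if tm_halt Mf q then (GoL, a, MoveS)
             else let '(q', s', m) := tm_delta Mf q s in (inl q', (s', fl), m)
  | inr None => (inl (tm_start Mf), (s, true), MoveS)
  | inr (Some None) => if fl then (ScanR, a, MoveS) else (GoL, a, MoveL)
  | inr (Some (Some None)) => if s == tm_blank Mf then (Pad 0, a, MoveS) else (ScanR, a, MoveR)
  | inr (Some (Some (Some j))) =>
      if nat_of_ord j < d then (Pad j.+1, (tm_inp Mf tt, false), MoveR)
      else (Pad d.+1, (tm_blank Mf, false), MoveS)
  end.

Lemma cinp_inj : injective (fun u : unit => (tm_inp Mf u, false) : Sy).
Proof. by move=> [] []. Qed.

Lemma cinp_nonblank u : ((tm_inp Mf u, false) : Sy) != (tm_blank Mf, false).
Proof. apply/eqP => [[]] /eqP; by rewrite (negbTE (@tm_inp_nonblank _ Mf u)). Qed.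

Definition Mc : TM unit := {|
  tm_state := St;
  tm_sym := Sy;
  tm_blank := (tm_blank Mf, false);
  tm_inp := fun u => (tm_inp Mf u, false);
  tm_inp_inj := cinp_inj;
  tm_inp_nonblank := cinp_nonblank;
  tm_start := inr None;
  tm_halt := haltp;
  tm_acc := fun _ => false;
  tm_delta := cdelta |}.

Notation stepc := (@tm_step unit Mc).
Notation stepf := (@tm_step unit Mf).

Definition lift (t : nat -> tm_sym Mf) : nat -> Sy := fun i => (t i, i == 0).

Lemma sim_step q t h : ~~ tm_halt Mf q ->
  stepc (inl q, lift t, h) =
  let '(q', t', h') := stepf (q, t, h) in (inl q', lift t', h').
Proof.
move=> hq; rewrite /tm_step /= (negbTE hq) /=.
case: (tm_delta Mf q (t h)) => [[q' s'] m] /=.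
congr (_, _, _); apply: functional_extensionality => i; rewrite /upd /lift.
by case: eqP => [->|].
Qed.

Lemma upd_same' T (E : nat -> T) a : upd E a (E a) = E.
Proof. apply: functional_extensionality => i; rewrite /upd; by case: eqP => [->|]. Qed.

Lemma init_step (x : seq unit) :
  stepc (tm_init Mc x) = (inl (tm_start Mf), lift (tm_ctape (tm_init Mf x)), 0).
Proof.
rewrite /tm_step /tm_init /=.
case: x => [|a x] /=; congr (_, _, _); apply: functional_extensionality => i; rewrite /upd /lift; case: i => [|i] //=; by case: (onth x i).
Qed.

Lemma run_sim (x : seq unit) u :
  (forall w, w < u -> ~~ tm_halt Mf (tm_cstate (tm_run Mf x w))) ->
  tm_run Mc x u.+1 = let '(q, t, h) := tm_run Mf x u in (inl q, lift t, h).
Proof.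
elim: u => [|u IH] hw.
  change (tm_run Mc x 1) with (stepc (tm_init Mc x)); rewrite init_step; by [].
rewrite /tm_run iterS -/(tm_run Mc x u.+1) IH; last by move=> w hw'; apply: hw; lia.
rewrite iterS -/(tm_run Mf x u).
have := hw u (ltnSn u).
case: (tm_run Mf x u) => [[q t] h] hq.
by rewrite sim_step.
Qed.

Lemma halted_fixed (x : seq unit) u w :
  tm_halt Mf (tm_cstate (tm_run Mf x u)) -> tm_run Mf x (w + u) = tm_run Mf x u.
Proof.
move=> hh; elim: w => [|w IH] //.
rewrite addSn {1}/tm_run iterS -/(tm_run Mf x (w + u)) IH.
move: hh; case: (tm_run Mf x u) => [[q t] h] /= hh.
by rewrite /tm_step hh.
Qed.

Lemma gol_loop t h : iter h stepc (GoL, lift t, h) = (GoL, lift t, 0).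
Proof.
elim: h => [|h IH] //.
rewrite iterSr {2}/tm_step /= /lift /=.
rewrite -/(lift t) upd_same'.
exact: IH.
Qed.

Lemma scan_loop t v j i : i + j = v -> (forall k, k < v -> t k != tm_blank Mf) ->
  iter j stepc (ScanR, lift t, i) = (ScanR, lift t, v).
Proof.
elim: j i => [|j IH] i hij hv; first by rewrite addn0 in hij; rewrite hij.
rewrite iterSr {2}/tm_step /= /lift /=.
have hi : i < v by lia.
rewrite (negbTE (hv i hi)) -/(lift t) upd_same'.
apply: IH => //=; lia.
Qed.

Definition padt (t : nat -> tm_sym Mf) v j : nat -> Sy :=
  fun i => if (v <= i) && (i < v + j) then (tm_inp Mf tt, false) else lift t i.

Lemma pad_loop t v j : j <= d ->
  iter j stepc (Pad 0, padt t v 0, v) = (Pad j, padt t v j, v + j).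
Proof.
elim: j => [|j IH] hj; first by rewrite addn0.
rewrite iterS IH; last lia.
rewrite {1}/tm_step /= inordK; last lia.
have -> : (j == d.+1) = false by apply/eqP; lia.
case: (padt t v j (v + j)) => s fl.
rewrite /= inordK; last lia.
rewrite hj /=; congr (_, _, _); last lia.
apply: functional_extensionality => i; rewrite /upd /padt.
case: eqP => [->|hne]; first by rewrite leq_addr /= addnS ltnS leqnn.
have -> : (v <= i < v + j.+1) = (v <= i < v + j) by apply/idP/idP => /andP [h1 h2]; apply/andP; split => //; lia. by [].
Qed.

Lemma runD n m x : tm_run Mc x (n + m) = iter n stepc (tm_run Mc x m).
Proof. by rewrite /tm_run iterD. Qed.

Lemma iter1 T (f : T -> T) c : iter 1 f c = f c. Proof. by []. Qed.

Lemma lift_same t h : upd (lift t) h (t h, h == 0) = lift t.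
Proof. exact: (upd_same' (lift t) h). Qed.

Lemma comp_run (x : seq unit) v :
  (exists t0, tm_halt Mf (tm_cstate (tm_run Mf x t0)) /\ tm_output_is (tm_run Mf x t0) v) ->
  exists t, tm_halt Mc (tm_cstate (tm_run Mc x t)) /\ tm_output_is (tm_run Mc x t) (v + d).
Proof.
move=> hex.
have hP : exists u, tm_halt Mf (tm_cstate (tm_run Mf x u)) by case: hex => t0 [h0 _]; exists t0.
case: (ex_minnP hP) => t1 ht1 hmin.
have ho : tm_output_is (tm_run Mf x t1) v.
  case: hex => t0 [h0 ho]; have := hmin t0 h0 => le.
  by rewrite -(halted_fixed (t0 - t1) ht1) subnK.
have hs := run_sim (u := t1) (x := x).
have hw : forall w, w < t1 -> ~~ tm_halt Mf (tm_cstate (tm_run Mf x w)).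
  move=> w hw; apply/negP => hh; have := hmin w hh; lia.
move: (hs hw) ht1 ho; case: (tm_run Mf x t1) => [[q1 T] h1] e0 /= hq1 [ho1 ho2]; rewrite /= in ho1 ho2.
have e1 : tm_run Mc x (1 + t1.+1) = (GoL, lift T, h1).
  rewrite runD e0 iter1 /tm_step /= /lift /= hq1 /= -/(lift T) lift_same //.
have e2 : tm_run Mc x (h1 + (1 + t1.+1)) = (GoL, lift T, 0) by rewrite runD e1 gol_loop.
have e3 : tm_run Mc x (1 + (h1 + (1 + t1.+1))) = (ScanR, lift T, 0).
  rewrite runD e2 iter1 /tm_step /= /lift /= -/(lift T) lift_same //.
have e4 : tm_run Mc x (v + (1 + (h1 + (1 + t1.+1)))) = (ScanR, lift T, v).
  by rewrite runD e3 (@scan_loop T v v 0) // add0n.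
have e5 : tm_run Mc x (1 + (v + (1 + (h1 + (1 + t1.+1))))) = (Pad 0, padt T v 0, v).
  rewrite runD e4 iter1 /tm_step /= /lift /= ho2 eqxx /=.
  congr (_, _, _); apply: functional_extensionality => i; rewrite /padt /upd /lift addn0.
  case: eqP => [->|_]; first by rewrite ho2 ltnn andbF.
  by have -> : (v <= i < v) = false by apply/negP => /andP [] *; lia.
have e6 : tm_run Mc x (d + (1 + (v + (1 + (h1 + (1 + t1.+1)))))) = (Pad d, padt T v d, v + d).
  by rewrite runD e5 pad_loop.
set N := d + _ in e6.
have e7 : tm_run Mc x (1 + N) = (Pad d.+1, upd (padt T v d) (v + d) (tm_blank Mf, false), v + d).
  rewrite runD e6 iter1 /tm_step /= inordK //.
  have -> : (d == d.+1) = false by apply/eqP; lia.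
  case: (padt T v d (v + d)) => s fl.
  by rewrite /= inordK // ltnn.
exists (1 + N); rewrite e7 /= inordK //; split; first by [].
rewrite /tm_output_is /=; split; last by rewrite /upd eqxx.
move=> i hi; rewrite /upd.
have -> : (i == v + d) = false by apply/eqP; lia.
rewrite /padt; case: ifP => hc; first exact: cinp_nonblank.
have hiv : i < v by move: hc; case: (boolP (v <= i)) => //= hvi; lia.
rewrite /lift; apply/eqP => [[]] hT _.
by move: (ho1 i hiv); rewrite hT eqxx.
Qed.

End Comp.

Lemma computable_plus f d : computable f -> computable (fun k => f k + d).
Proof. case=> Mf hf; exists (Mc Mf d) => k; apply: comp_run; exact: hf k. Qed.

Lemma bound_arith (n K c0 T G : nat) : 0 < n ->
  T = K * (n ^ c0 + c0) -> G = K + (2 * c0 + 1) ->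
  3 + 20 * (T * (T + 1)) <= (20 * (c0 + 1) ^ 2) * (G ^ 2 * n ^ G) + 3.
Proof.
move=> hn hT hG.
set P := n ^ c0.
have hP : 0 < P by rewrite /P expn_gt0 hn.
have h1 : T + 1 <= G * (c0 + 1) * P by rewrite hT hG; nia.
have h2 : T * (T + 1) <= (G * (c0 + 1) * P) * (G * (c0 + 1) * P).
  apply: leq_mul => //; lia.
have h3 : P * P <= n ^ G.
  rewrite /P -expnD; apply: leq_pexp2l => //; rewrite hG; lia.
have h4 : (G * (c0 + 1) * P) * (G * (c0 + 1) * P) = ((c0 + 1) ^ 2 * G ^ 2) * (P * P).
  rewrite !expnS !expn0; nia.
have h5 : ((c0 + 1) ^ 2 * G ^ 2) * (P * P) <= ((c0 + 1) ^ 2 * G ^ 2) * n ^ G by apply: leq_mul.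
rewrite addnC leq_add2r.
apply: (leq_trans (leq_mul (leqnn 20) (leq_trans h2 (eq_leq h4)))).
apply: (leq_trans (leq_mul (leqnn 20) h5)).
rewrite !expnS !expn0; apply: eq_leq; nia.
Qed.

Theorem theorem4 (Sigma : finType) (Q : pred (seq Sigma))
    (kappa : seq Sigma -> nat) :
  fpt Q kappa ->
  exists g : nat -> nat, computable g /\
  exists (D : TLM Sigma) (m : nat -> nat) (c : nat),
    forall x : seq Sigma,
      0 < m (kappa x) <= c * g (kappa x) ^ c + c /\
      tl_solves_on D (m (kappa x)) Q x
        (c * (g (kappa x) ^ 2 * size x ^ g (kappa x)) + c)
        (c * (g (kappa x) ^ 2 * size x ^ g (kappa x)) + c).
Proof.
case=> _ [f [hf [M [c0 hM]]]].
exists (fun k => f k + (2 * c0 + 1)); split; first exact: computable_plus.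
set T0 := f (kappa [::]) * (0 ^ c0 + c0).
set C := 20 * (c0 + 1) ^ 2 + (3 + 20 * (T0 * (T0 + 1))) + 3.
exists (D M), (fun _ => 1), C => x.
have hC : 1 <= C by rewrite /C; lia.
split; first by apply/andP; split => //; lia.
set T := f (kappa x) * (size x ^ c0 + c0).
have [s [hg hc]] := run_lemma M x T.
have [hh ha] := hM x.
rewrite /= -/T in hh ha.
exists s.
move: hg hc hh ha; case: (tm_run M x T) => [[q tp] h] [hs _] hc /= hh ha.
rewrite hs /= hh; split; first by [].
split; first exact: ha.
set G := f (kappa x) + (2 * c0 + 1).
have hB : 3 + 20 * (T * (T + 1)) <= C * (G ^ 2 * size x ^ G) + C.
  case: (posnP (size x)) => hn.
    have hx : x = [::] by apply/nilP; rewrite /nilp hn.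
    have -> : T = T0 by rewrite /T /T0 hx.
    rewrite /C; lia.
  have := bound_arith (K := f (kappa x)) (c0 := c0) hn (erefl T) (erefl G).
  have : 20 * (c0 + 1) ^ 2 * (G ^ 2 * size x ^ G) <= C * (G ^ 2 * size x ^ G).
    by apply: leq_mul => //; rewrite /C; lia.
  lia.
split; lia.
Qed.
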